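(* Let $A\in\mathcal{PM}(n)$. If the poset vectors of $A$ have pairwise distinct support sizes (i.e., $|\mathrm{supp}(v)|\ne|\mathrm{supp}(w)|$ for all distinct poset vectors $v,w$ of $A$), then $\mathrm{Aut}(A)=\{Q\in\mathfrak P_n: Q^TAQ=A\}$ is trivial, i.e., equals $\{I_n\}$.
   Context: Let $X_n=\{0,1,\ldots,n-1\}$. A naturally labeled (NL) poset on $X_n$ is a partial order $\preceq$ on $X_n$ such that $x\preceq y$ implies $x\le y$ in the usual integer order. Its poset matrix is the $n\times n$ $(0,1)$-matrix $A=(a_{i,j})_{i,j\in X_n}$ with $a_{i,j}=1$ if $j\preceq i$ and $0$ otherwise; $\mathcal{PM}(n)$ is the set of all such matrices. For a row vector $v\in\{0,1\}^n$, $A^v=\begin{bmatrix}A&\mathbf{0}\\ v&1\end{bmatrix}$, and $v$ is a poset vector of $A$ if $A^v\in\mathcal{PM}(n+1)$. $\mathrm{supp}(v)=\{j: v_j=1\}$. $\mathfrak P_n$ is the group of $n\times n$ permutation matrices. *)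

(* Defs.v *)
(* Matrices over int, indices 'I_n = X_n. *)
From mathcomp Require Import all_boot all_order all_algebra all_fingroup.
Set Implicit Arguments. Unset Strict Implicit. Unset Printing Implicit Defensive.
Import GRing.Theory Num.Theory.
Local Open Scope ring_scope.

(* A is a (0,1)-matrix and j <=_P i :<-> A i j = 1 is a naturally labeled
   partial order: reflexive, transitive, and j <=_P i implies j <= i
   (which also yields antisymmetry). *)
Definition is_poset_mx (n : nat) (A : 'M[int]_n) : Prop :=
  [/\ (forall i j, A i j = 0 \/ A i j = 1),
      (forall i, A i i = 1),
      (forall i j, A i j = 1 -> (j <= i)%N),
      (forall i j k, A i j = 1 -> A j k = 1 -> A i k = 1) &
      (forall i j, A i j = 1 -> A j i = 1 -> i = j)].

Definition ext_mx (n : nat) (A : 'M[int]_n) (v : 'rV[int]_n) : 'M[int]_(n + 1) :=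
  block_mx A 0 v 1%:M.

Definition is_01_row (n : nat) (v : 'rV[int]_n) : Prop :=
  forall j, v 0 j = 0 \/ v 0 j = 1.

Definition is_poset_vector (n : nat) (A : 'M[int]_n) (v : 'rV[int]_n) : Prop :=
  is_01_row v /\ is_poset_mx (ext_mx A v).

Definition supp (n : nat) (v : 'rV[int]_n) : {set 'I_n} := [set j | v 0 j == 1].

(* Main.v *)
Require Import Defs.
From mathcomp Require Import all_boot all_order all_algebra all_fingroup.
Local Open Scope ring_scope.

Lemma idx_cases n (i : 'I_(n + 1)) :
  (exists j, i = lshift 1 j) \/ i = rshift n (ord0 : 'I_1).
Proof.
case: (splitP i) => [j|k] Hi; [left; exists j | right]; apply/val_inj => /=.
  by rewrite Hi.
by rewrite Hi (ord1 k).
Qed.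
Arguments idx_cases {n}.

Lemma ext_poset n (A : 'M[int]_n) (v : 'rV[int]_n) :
  is_poset_mx A -> is_01_row v ->
  (forall j k, v 0 j = 1 -> A j k = 1 -> v 0 k = 1) ->
  is_poset_mx (ext_mx A v).
Proof.
case=> A01 Adiag Aord Atr Aanti v01 vcl.
have h01 : ((0:int) = 1) -> False by [].
have E0 : forall k : 'I_1, k = 0 by move=> k; rewrite (ord1 k).
rewrite /ext_mx; split.
- move=> i j; case: (idx_cases i) => [[i' ->]|->]; case: (idx_cases j) => [[j' ->]|->];
  rewrite ?block_mxEul ?block_mxEur ?block_mxEdl ?block_mxEdr ?mxE ?eqxx; auto.
- move=> i; case: (idx_cases i) => [[i' ->]|->];
  rewrite ?block_mxEul ?block_mxEur ?block_mxEdl ?block_mxEdr ?mxE ?eqxx; auto.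
- move=> i j; case: (idx_cases i) => [[i' ->]|->]; case: (idx_cases j) => [[j' ->]|->];
  rewrite ?block_mxEul ?block_mxEur ?block_mxEdl ?block_mxEdr ?mxE ?eqxx /=; auto.
  + by move/h01.
  + by move=> _; rewrite addn0 ltnW.
- move=> i j k; case: (idx_cases i) => [[i' ->]|->]; case: (idx_cases j) => [[j' ->]|->];
  case: (idx_cases k) => [[k' ->]|->];
  rewrite ?block_mxEul ?block_mxEur ?block_mxEdl ?block_mxEdr ?mxE ?eqxx /=;
  try (by move=> /h01); try (by move=> _ /h01); eauto.
- move=> i j; case: (idx_cases i) => [[i' ->]|->]; case: (idx_cases j) => [[j' ->]|->];
  rewrite ?block_mxEul ?block_mxEur ?block_mxEdl ?block_mxEdr ?mxE ?eqxx /=;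
  try (by move=> /h01); try (by move=> _ /h01); auto.
  by move=> H1 H2; rewrite (Aanti _ _ H1 H2).
Qed.

Theorem theorem3p5 (n : nat) (A : 'M[int]_n) :
  is_poset_mx A ->
  (forall v w : 'rV[int]_n, is_poset_vector A v -> is_poset_vector A w ->
     v <> w -> #|supp v| <> #|supp w|) ->
  forall Q : 'M[int]_n, is_perm_mx Q -> Q^T *m A *m Q = A -> Q = 1%:M.
Proof.
move=> HA Huniq Q /existsP [s /eqP ->] HQ.
have HA' := HA; case: HA' => A01 Adiag Aord Atr Aanti.
have HT : forall i j, A (s^-1%g i) (s^-1%g j) = A i j.
  move=> i j; rewrite -{2}HQ tr_perm_mx -row_permE.
  have -> : perm_mx s = perm_mx (s^-1)^-1 :> 'M[int]_n by rewrite invgK.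
  by rewrite -col_permE !mxE.
pose vec (x : 'I_n) : 'rV[int]_n := \row_j A x j.
have Pv : forall x, is_poset_vector A (vec x).
  move=> x; split; first by move=> j; rewrite mxE; apply: A01.
  apply: ext_poset => //; first by move=> j; rewrite mxE; apply: A01.
  by move=> j k; rewrite !mxE; apply: Atr.
have Efix : forall x, s^-1%g x = x.
  move=> x.
  have Hc : #|supp (vec x)| = #|supp (vec (s^-1%g x))|.
    have -> : supp (vec x) = s^-1%g @^-1: supp (vec (s^-1%g x)).
      by apply/setP => j; rewrite !inE !mxE HT.
    by rewrite card_preimset //; apply: perm_inj.
  have E : vec x = vec (s^-1%g x).
    case: (eqVneq (vec x) (vec (s^-1%g x))) => // ne.
    by exfalso; apply: (Huniq _ _ (Pv x) (Pv _) (elimN eqP ne) Hc).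
  have H1 := congr1 (fun w : 'rV[int]_n => w 0 x) E.
  have H2 := congr1 (fun w : 'rV[int]_n => w 0 (s^-1%g x)) E.
  rewrite /= !mxE Adiag in H1 H2.
  by apply: Aanti; [rewrite -H1 | rewrite H2].
have -> : s = 1%g.
  rewrite -[s]invgK; have -> : (s^-1)%g = 1%g by apply/permP => x; rewrite perm1 Efix.
  by rewrite invg1.
by rewrite perm_mx1.
Qed.
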